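(* Let $a,b,c,d>0$ with $a+c\le b+d$, let $\mu\in(0,1]$ and $u>(c+d)/2$, and consider on $\mathcal{I}=[0,1]^2$ the controlled system $$\dot x=x(1-x)\big[xr(-c+d-a+b)+x(a-b)-r(d+b)+b+u\big]+\mu(1-2x),\qquad \dot r=r(1-r)(2x-1).$$ Let $(x_t^*,1)$ be the equilibrium on the side $\{r=1\}$ with $x_t^*\in(1/2,1)$. Then $(x_t^*,1)$ is almost globally stable.
   Context: For these parameters there is exactly one equilibrium $(x_t^*,1)$ on $\mathcal{B}_t=\{(x,1):x\in[0,1]\}$ with $x_t^*\in(1/2,1)$. An equilibrium is almost globally stable if it is asymptotically stable and every trajectory starting in $\mathcal{I}\setminus(\mathcal{B}_t\cup\mathcal{B}_b)$ converges to it, where $\mathcal{B}_b=\{(x,0):x\in[0,1]\}$. *)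

(* Defs.v *)
From Stdlib Require Import Reals.
Open Scope R_scope.

Definition fx (a b c d mu u : R) (x r : R) : R :=
  x * (1 - x) * (x * r * (- c + d - a + b) + x * (a - b) - r * (d + b) + b + u)
  + mu * (1 - 2 * x).

Definition fr (x r : R) : R := r * (1 - r) * (2 * x - 1).

Definition in_I (x r : R) : Prop := 0 <= x <= 1 /\ 0 <= r <= 1.

Definition in_Bt (x r : R) : Prop := 0 <= x <= 1 /\ r = 1.
Definition in_Bb (x r : R) : Prop := 0 <= x <= 1 /\ r = 0.

Definition dist2 (x r x' r' : R) : R := sqrt ((x - x') ^ 2 + (r - r') ^ 2).

Definition is_trajectory (a b c d mu u : R) (X Rr : R -> R) : Prop :=
  (forall t, 0 <= t -> continuity_pt X t /\ continuity_pt Rr t) /\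
  (forall t, 0 < t ->
     derivable_pt_lim X t (fx a b c d mu u (X t) (Rr t)) /\
     derivable_pt_lim Rr t (fr (X t) (Rr t))).

Definition converges_to (X Rr : R -> R) (xe re : R) : Prop :=
  forall eps, 0 < eps -> exists T, forall t, T <= t -> dist2 (X t) (Rr t) xe re < eps.

Definition lyap_stable (a b c d mu u xe re : R) : Prop :=
  forall eps, 0 < eps -> exists delta, 0 < delta /\
    forall X Rr, is_trajectory a b c d mu u X Rr -> in_I (X 0) (Rr 0) ->
      dist2 (X 0) (Rr 0) xe re < delta ->
      forall t, 0 <= t -> dist2 (X t) (Rr t) xe re < eps.

Definition asymp_stable (a b c d mu u xe re : R) : Prop :=
  lyap_stable a b c d mu u xe re /\
  exists delta, 0 < delta /\
    forall X Rr, is_trajectory a b c d mu u X Rr -> in_I (X 0) (Rr 0) ->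
      dist2 (X 0) (Rr 0) xe re < delta -> converges_to X Rr xe re.

Definition almost_globally_stable (a b c d mu u xe re : R) : Prop :=
  asymp_stable a b c d mu u xe re /\
  forall X Rr, is_trajectory a b c d mu u X Rr ->
    in_I (X 0) (Rr 0) -> ~ in_Bt (X 0) (Rr 0) -> ~ in_Bb (X 0) (Rr 0) ->
    converges_to X Rr xe re.

(* Main.v *)
Require Import Defs.
From Stdlib Require Import Reals Lra Psatz Classical.
From Coquelicot Require Import Coquelicot.
Open Scope R_scope.

Definition Qf (c d u ys y : R) := (u-(c+d)/2) + (u-(c+d)/2)*y*ys + ((d-c)/2)*y*ys*(y+ys).

Lemma cont_nbhd f x eps : continuity_pt f x -> 0 < eps ->
  exists del, 0 < del /\ forall y, Rabs (y - x) < del -> Rabs (f y - f x) < eps.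
Proof.
  intros Hc He. destruct (Hc eps He) as [del [Hd H]]. exists del; split; auto.
  intros y Hy. destruct (Req_dec y x) as [->|Hne].
  - rewrite Rminus_diag, Rabs_R0; auto.
  - apply H. split. unfold D_x, no_cond; split; auto. unfold R_dist; auto.
Qed.

Lemma barrier (h dh : R -> R) (t0 T eta : R) :
  0 < eta ->
  (forall t, t0 <= t <= T -> continuity_pt h t) ->
  (forall t, t0 < t < T -> derivable_pt_lim h t (dh t)) ->
  (forall t, t0 <= t <= T -> 0 <= h t <= eta -> dh t <= 0) ->
  h t0 <= 0 -> forall t, t0 <= t <= T -> h t <= 0.
Proof.
  intros Heta Hc Hd Hdh H0 t Ht.
  destruct (Rle_or_lt (h t) 0) as [Hle|Hgt]; [exact Hle|exfalso].
  assert (Htt0 : t0 < t). { destruct (Req_dec t t0) as [->|Hne]; [lra|lra]. }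
  set (E := fun s => t0 <= s <= t /\ h s <= 0).
  assert (HB : bound E). { exists t. intros s [Hs _]. lra. }
  assert (HE : exists s, E s). { exists t0. split; lra. }
  destruct (completeness E HB HE) as [sg [Hub Hlub]].
  assert (Hs1 : t0 <= sg). { apply Hub. split; lra. }
  assert (Hs2 : sg <= t). { apply Hlub. intros s [Hs _]. lra. }
  assert (Hcs : continuity_pt h sg) by (apply Hc; lra).
  assert (Hpos : forall s, sg < s <= t -> 0 < h s).
  { intros s Hs. destruct (Rle_or_lt (h s) 0) as [Hn|Hp]; auto.
    assert (s <= sg) by (apply Hub; split; lra). lra. }
  assert (Hz : h sg = 0).
  { destruct (Rtotal_order (h sg) 0) as [Hl|[He|Hg]]; auto.
    - exfalso. destruct (cont_nbhd h sg (- h sg) Hcs) as [del [Hdel Hn]]; [lra|].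
      destruct (Req_dec sg t) as [Heq|Hne]; [subst; lra|].
      set (s := Rmin t (sg + del/2)).
      assert (Hs : sg < s <= t) by (unfold s; apply Rmin_case_strong; intros; lra).
      assert (Hsd : Rabs (s - sg) < del).
      { rewrite Rabs_right by lra. unfold s; apply Rmin_case_strong; intros; lra. }
      specialize (Hn s Hsd). specialize (Hpos s Hs).
      apply Rabs_def2 in Hn. lra.
    - exfalso. destruct (cont_nbhd h sg (h sg) Hcs) as [del [Hdel Hn]]; [lra|].
      assert (Hub2 : is_upper_bound E (sg - del/2)).
      { intros s [Hs Hhs]. destruct (Rle_or_lt s (sg - del/2)) as [Hq|Hq]; auto.
        assert (Hss : s <= sg) by (apply Hub; split; lra).
        assert (Hsd : Rabs (s - sg) < del) by (rewrite Rabs_left1 by lra; lra).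
        specialize (Hn s Hsd). apply Rabs_def2 in Hn. lra. }
      specialize (Hlub _ Hub2). lra. }
  assert (Hst : sg < t). { destruct (Req_dec sg t) as [Heq|Hne]; [subst; lra|lra]. }
  destruct (cont_nbhd h sg eta Hcs Heta) as [del [Hdel Hn]].
  set (tau := Rmin t (sg + del/2)).
  assert (Htau : sg < tau <= t) by (unfold tau; apply Rmin_case_strong; intros; lra).
  assert (Htau2 : tau - sg < del) by (unfold tau; apply Rmin_case_strong; intros; lra).
  destruct (MVT_gen h sg tau dh) as [cc [Hcc Heq]].
  - intros x Hx. rewrite Rmin_left in Hx by lra. rewrite Rmax_right in Hx by lra.
    apply is_derive_Reals. apply Hd. lra.
  - intros x Hx. rewrite Rmin_left in Hx by lra. rewrite Rmax_right in Hx by lra.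
    apply Hc. lra.
  - rewrite Rmin_left in Hcc by lra. rewrite Rmax_right in Hcc by lra.
    assert (Hhc : 0 <= h cc <= eta).
    { destruct (Req_dec cc sg) as [->|Hne]; [lra|].
      assert (Rabs (cc - sg) < del) by (rewrite Rabs_right by lra; lra).
      specialize (Hn cc H). apply Rabs_def2 in Hn.
      specialize (Hpos cc ltac:(lra)). lra. }
    assert (dh cc <= 0) by (apply Hdh; [lra|exact Hhc]).
    specialize (Hpos tau Htau).
    assert (dh cc * (tau - sg) <= 0).
    { apply Rmult_le_0_r; lra. }
    lra.
Qed.

Lemma mvt_lb (f df : R -> R) (a b m : R) : a < b ->
  (forall t, a < t < b -> derivable_pt_lim f t (df t)) ->
  (forall t, a <= t <= b -> continuity_pt f t) ->
  (forall t, a <= t <= b -> m <= df t) -> f b - f a >= m * (b - a).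
Proof.
  intros Hab Hd Hc Hm.
  destruct (MVT_gen f a b df) as [cc [Hcc Heq]].
  - intros x Hx. rewrite Rmin_left in Hx by lra. rewrite Rmax_right in Hx by lra.
    apply is_derive_Reals. apply Hd. lra.
  - intros x Hx. rewrite Rmin_left in Hx by lra. rewrite Rmax_right in Hx by lra.
    apply Hc. lra.
  - rewrite Rmin_left in Hcc by lra. rewrite Rmax_right in Hcc by lra.
    rewrite Heq. specialize (Hm cc Hcc). apply Rle_ge. apply Rmult_le_compat_r; lra.
Qed.
Lemma dcomb (F w : R -> R) t l dw c1 c0 c2 :
  derivable_pt_lim F t l -> derivable_pt_lim w t dw ->
  derivable_pt_lim (fun s => (c1 * F s + c0) * w s + c2) t
    (c1 * l * w t + (c1 * F t + c0) * dw).
Proof.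
  intros HF Hw.
  change (fun s => (c1 * F s + c0) * w s + c2) with
    ((((fct_cte c1) * F + fct_cte c0) * w) + fct_cte c2)%F.
  replace (c1 * l * w t + (c1 * F t + c0) * dw) with
    ((((0 * F t + fct_cte c1 t * l) + 0) * w t + ((fct_cte c1 * F + fct_cte c0)%F t) * dw) + 0).
  2:{ unfold fct_cte, plus_fct, mult_fct. ring. }
  apply derivable_pt_lim_plus; [|apply derivable_pt_lim_const].
  apply derivable_pt_lim_mult; auto.
  apply derivable_pt_lim_plus; [|apply derivable_pt_lim_const].
  apply derivable_pt_lim_mult; auto. apply derivable_pt_lim_const.
Qed.

Lemma ccomb (F w : R -> R) t c1 c0 c2 :
  continuity_pt F t -> continuity_pt w t ->
  continuity_pt (fun s => (c1 * F s + c0) * w s + c2) t.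
Proof.
  intros HF Hw.
  change (fun s => (c1 * F s + c0) * w s + c2) with
    ((((fct_cte c1) * F + fct_cte c0) * w) + fct_cte c2)%F.
  apply continuity_pt_plus; [|apply continuity_pt_const; intros ? ?; reflexivity].
  apply continuity_pt_mult; auto.
  apply continuity_pt_plus; [|apply continuity_pt_const; intros ? ?; reflexivity].
  apply continuity_pt_mult; auto. apply continuity_pt_const; intros ? ?; reflexivity.
Qed.

Lemma d_exp k t : derivable_pt_lim (fun s => exp (k * s)) t (k * exp (k * t)).
Proof. apply is_derive_Reals. auto_derive; auto. ring. Qed.
Lemma d_aff A k t : derivable_pt_lim (fun s => A + k * s) t k.
Proof. apply is_derive_Reals. auto_derive; auto. ring. Qed.
Definition Bx (a b c d : R) x := x*(1-x)*(x*(-c+d-a+b) - (d+b)).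

Lemma A1 a b c d mu u x r : fx a b c d mu u x r = fx a b c d mu u x 1 + (r-1)*Bx a b c d x.
Proof. unfold fx, Bx. ring. Qed.

Lemma A2 a b c d x : 0 < a -> 0 < b -> 0 < c -> 0 < d -> 0 <= x <= 1 ->
  -(a+b+c+d)/4 <= Bx a b c d x <= 0.
Proof.
  intros. unfold Bx.
  assert (HT : x*(-c+d-a+b) - (d+b) = -((1-x)*(b+d) + x*(a+c))) by ring.
  rewrite HT.
  assert (Hp1: 0 <= x*(1-x) <= 1/4) by (pose proof (pow2_ge_0 (x-1/2)); split; nra).
  assert (Hp2: 0 <= (1-x)*(b+d) + x*(a+c) <= a+b+c+d) by (split; nra).
  set (P := x*(1-x)) in *. set (W := (1-x)*(b+d) + x*(a+c)) in *.
  split; nra.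
Qed.

Lemma A4 c d u ys y : 0 < u-(c+d)/2 -> 0 < ys < 1 -> 0 < (u-(c+d)/2) + (d-c)/2*ys ->
  0 <= y <= 1 ->
  Rmin (u-(c+d)/2) ((1+ys)*((u-(c+d)/2) + (d-c)/2*ys)) <= Qf c d u ys y.
Proof.
  intros Hp Hys Hpq Hy. unfold Qf.
  set (p := u-(c+d)/2) in *. set (q := (d-c)/2) in *.
  destruct (Rle_or_lt 0 q) as [Hq|Hq].
  - eapply Rle_trans; [apply Rmin_l|].
    assert (0 <= y*ys) by nra.
    assert (0 <= y + ys) by lra.
    assert (0 <= q*(y*ys)*(y+ys)) by (apply Rmult_le_pos; [apply Rmult_le_pos|]; lra).
    assert (0 <= p*(y*ys)) by nra.
    replace (p + p*y*ys + q*y*ys*(y+ys)) with (p + p*(y*ys) + q*(y*ys)*(y+ys)) by ring.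
    lra.
  - set (m := Rmin p ((1+ys)*(p+q*ys))).
    assert (m <= p) by apply Rmin_l.
    assert (m <= (1+ys)*(p+q*ys)) by apply Rmin_r.
    replace (p + p*y*ys + q*y*ys*(y+ys)) with
      ((1-y)*p + y*((1+ys)*(p+q*ys)) + (-q)*ys*(y*(1-y))) by ring.
    assert (0 <= y*(1-y)) by nra.
    assert (0 <= (-q)*ys*(y*(1-y))) by (apply Rmult_le_pos; [nra|lra]).
    assert ((1-y)*m <= (1-y)*p) by (apply Rmult_le_compat_l; lra).
    assert (y*m <= y*((1+ys)*(p+q*ys))) by (apply Rmult_le_compat_l; lra).
    lra.
Qed.

Lemma A3 a b c d mu u x xs :
  2*(2*xs-1)*fx a b c d mu u x 1 = (xs-x)*Qf c d u (2*xs-1) (2*x-1) + 2*(2*x-1)*fx a b c d mu u xs 1.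
Proof. unfold fx, Qf. field. Qed.

Lemma Apq a b c d mu u xs : 4 * fx a b c d mu u xs 1 =
  (1-(2*xs-1)^2)*((u-(c+d)/2) + (d-c)/2*(2*xs-1)) - 4*mu*(2*xs-1).
Proof. unfold fx. field. Qed.

Lemma A5 a b c d mu u xs : 0 < c -> 0 < d -> 0 < mu -> (c+d)/2 < u -> 1/2 < xs < 1 ->
  fx a b c d mu u xs 1 = 0 ->
  exists qm, 0 < qm /\ forall x, 1/2 <= x <= 1 ->
    (x <= xs -> (xs - x)*qm <= fx a b c d mu u x 1) /\
    (xs <= x -> fx a b c d mu u x 1 <= - (x - xs)*qm).
Proof.
  intros Hc Hd Hmu Hu Hxs H0.
  set (ys := 2*xs-1). assert (Hys : 0 < ys < 1) by (unfold ys; lra).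
  set (p := u-(c+d)/2). assert (Hp : 0 < p) by (unfold p; lra).
  set (q := (d-c)/2).
  assert (Hpq : 0 < p + q*ys).
  { pose proof (Apq a b c d mu u xs) as E. rewrite H0 in E. fold ys p q in E.
    assert (0 < 1 - ys^2) by nra.
    assert (0 < mu*ys) by nra.
    destruct (Rle_or_lt (p+q*ys) 0); [|auto]. nra. }
  set (qm := Rmin p ((1+ys)*(p+q*ys))).
  assert (Hqm : 0 < qm) by (unfold qm; apply Rmin_case; nra).
  exists (qm/2). split; [lra|]. intros x Hx.
  pose proof (A3 a b c d mu u x xs) as E. rewrite H0 in E. fold ys in E.
  assert (HQ : qm <= Qf c d u ys (2*x-1)) by (apply A4; fold p q; auto; lra).
  set (Q := Qf c d u ys (2*x-1)) in *. set (g := fx a b c d mu u x 1) in *.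
  split; intros Hxx.
  - assert ((xs-x)*qm <= (xs-x)*Q) by (apply Rmult_le_compat_l; lra).
    assert (0 <= g) by nra.
    assert (g*ys <= g) by nra. lra.
  - assert ((x-xs)*qm <= (x-xs)*Q) by (apply Rmult_le_compat_l; lra).
    assert (g <= 0) by nra.
    assert (g <= g*ys) by nra. lra.
Qed.
Lemma A6 a b c d mu u : 0 < a -> 0 < b -> 0 < c -> 0 < d -> 0 < mu <= 1 -> (c+d)/2 < u ->
  exists eta delta, 0 < eta /\ eta <= 1/8 /\ 0 < delta /\
    forall x r, 1/2 - 2*eta <= x <= 1/2 + 2*eta -> 0 <= r <= 1 -> delta <= fx a b c d mu u x r.
Proof.
  intros Ha Hb Hc Hd Hmu Hu.
  set (p := u-(c+d)/2). assert (Hp : 0 < p) by (unfold p; lra).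
  set (S := a+b+c+d). assert (HS : 0 < S) by (unfold S; lra).
  set (eta := Rmin (1/8) (Rmin (p/(8*S)) (p/128))).
  assert (He1 : eta <= 1/8) by apply Rmin_l.
  assert (He2 : eta <= p/(8*S)) by (eapply Rle_trans; [apply Rmin_r|apply Rmin_l]).
  assert (He3 : eta <= p/128) by (eapply Rle_trans; [apply Rmin_r|apply Rmin_r]).
  assert (He0 : 0 < eta).
  { unfold eta. apply Rmin_case; [lra|]. apply Rmin_case; [|lra].
    apply Rdiv_lt_0_compat; lra. }
  exists eta, (p/32). split; [auto|]. split; [auto|]. split; [lra|].
  intros x r Hx Hr.
  set (s := x - 1/2).
  set (H0 := (a+b)/2 + u - r*S/2). set (h1 := (1-r)*(a-b) + r*(d-c)).
  assert (E : fx a b c d mu u x r = (1/4 - s^2)*(H0 + s*h1) - 2*mu*s).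
  { unfold fx, s, H0, h1, S. field. }
  rewrite E.
  assert (HH0 : p <= H0).
  { unfold H0, p, S. assert (0 <= (1-r)*(a+b+c+d)) by (apply Rmult_le_pos; lra). lra. }
  assert (Hh1 : -S <= h1 <= S).
  { unfold h1, S. split.
    - assert (-(1-r)*(a+b) <= (1-r)*(a-b)) by nra. assert (-(r*(c+d)) <= r*(d-c)) by nra. nra.
    - assert ((1-r)*(a-b) <= (1-r)*(a+b)) by nra. assert (r*(d-c) <= r*(c+d)) by nra. nra. }
  assert (Hs : -(2*eta) <= s <= 2*eta) by (unfold s; lra).
  assert (HeS : 2*eta*S <= p/4).
  { assert (eta*S <= p/(8*S)*S) by (apply Rmult_le_compat_r; lra).
    replace (p/(8*S)*S) with (p/8) in H by (field; lra). lra. }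
  assert (Hsh : -(2*eta*S) <= s*h1).
  { assert (0 <= (2*eta - s)*(S - h1)) by (apply Rmult_le_pos; lra).
    assert (0 <= (2*eta + s)*(S + h1)) by (apply Rmult_le_pos; lra). nra. }
  assert (Hs2 : s^2 <= 4*eta^2).
  { assert (0 <= (2*eta - s)*(2*eta + s)) by (apply Rmult_le_pos; lra). nra. }
  assert (Hf1 : 1/8 <= 1/4 - s^2) by nra.
  assert (Hf2 : p/2 <= H0 + s*h1) by lra.
  assert (Hf3 : 1/8 * (p/2) <= (1/4 - s^2)*(H0 + s*h1)) by (apply Rmult_le_compat; lra).
  assert (Hf4 : 2*mu*s <= 4*eta) by nra.
  lra.
Qed.
Lemma A7 a b c d mu u x r : 0 < a -> 0 < b -> 0 < c -> 0 < d -> 0 < mu -> 0 < u ->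
  0 <= x <= 1/2 -> 0 <= r <= u/(2*(a+b+c+d)) -> Rmin mu (u/8) <= fx a b c d mu u x r.
Proof.
  intros Ha Hb Hc Hd Hmu Hu Hx Hr.
  set (S := a+b+c+d) in *. assert (HS : 0 < S) by (unfold S; lra).
  set (W := (1-x)*(b+d) + x*(a+c)).
  assert (HW : 0 <= W <= S) by (unfold W, S; split; nra).
  set (H := ((1-x)*b + x*a + u) - r*W).
  assert (E : fx a b c d mu u x r = x*(1-x)*H + mu*(1-2*x)) by (unfold fx, H, W; ring).
  rewrite E.
  assert (HrW : r*W <= u/2).
  { assert (r*W <= u/(2*S)*S) by (apply Rmult_le_compat; lra).
    replace (u/(2*S)*S) with (u/2) in H0 by (field; lra). lra. }
  assert (HH : u/2 <= H) by (unfold H; nra).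
  assert (Hxx : x/2 <= x*(1-x)) by nra.
  assert (x/2*(u/2) <= x*(1-x)*H) by (apply Rmult_le_compat; lra).
  set (m := Rmin mu (u/8)).
  assert (m <= mu) by apply Rmin_l. assert (m <= u/8) by apply Rmin_r.
  assert ((1-2*x)*m <= (1-2*x)*mu) by (apply Rmult_le_compat_l; lra).
  assert ((2*x)*m <= (2*x)*(u/8)) by (apply Rmult_le_compat_l; lra).
  lra.
Qed.

Lemma Rabs_le_inv' a b : Rabs a <= b -> -b <= a <= b.
Proof. unfold Rabs; destruct (Rcase_abs a); intros; lra. Qed.

Lemma A8 a b c d mu u M : 0 < a -> 0 < b -> 0 < c -> 0 < d -> 0 < mu -> 0 < u -> 0 <= M ->
  exists eta, 0 < eta /\ forall x r, Rabs r <= M ->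
    (1 <= x <= 1 + eta -> fx a b c d mu u x r <= 0) /\
    (-eta <= x <= 0 -> 0 <= fx a b c d mu u x r).
Proof.
  intros Ha Hb Hc Hd Hmu Hu HM.
  set (S := a+b+c+d).
  set (C := 1 + b + u + 2*(a+b) + M*(b+d) + 2*M*S).
  assert (HC : 1 <= C) by (unfold C, S; nra).
  set (eta := Rmin 1 (mu/(4*C))).
  assert (He1 : eta <= 1) by apply Rmin_l.
  assert (He2 : eta <= mu/(4*C)) by apply Rmin_r.
  assert (He0 : 0 < eta) by (unfold eta; apply Rmin_case; [lra|apply Rdiv_lt_0_compat; lra]).
  assert (HeC : eta*C <= mu/4).
  { assert (eta*C <= mu/(4*C)*C) by (apply Rmult_le_compat_r; lra).
    replace (mu/(4*C)*C) with (mu/4) in H by (field; lra). lra. }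
  exists eta. split; auto. intros x r Hr.
  assert (HHb : forall x, -1 <= x <= 2 ->
    Rabs (x*r*(-c+d-a+b) + x*(a-b) - r*(d+b) + b + u) <= C).
  { intros y Hy.
    assert (Hyabs : Rabs y <= 2) by (apply Rabs_le; lra).
    unfold Rminus.
    eapply Rle_trans; [apply Rabs_triang|].
    eapply Rle_trans; [apply Rplus_le_compat_r; apply Rabs_triang|].
    eapply Rle_trans; [apply Rplus_le_compat_r; apply Rplus_le_compat_r; apply Rabs_triang|].
    eapply Rle_trans; [apply Rplus_le_compat_r; apply Rplus_le_compat_r; apply Rplus_le_compat_r; apply Rabs_triang|].
    rewrite Rabs_Ropp, !Rabs_mult.
    rewrite (Rabs_right b) by lra. rewrite (Rabs_right u) by lra.
    rewrite (Rabs_right (d+b)) by lra.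
    assert (Rabs (-c+d+-a+b) <= S) by (apply Rabs_le; unfold S; lra).
    assert (Rabs (a + - b) <= a+b) by (apply Rabs_le; lra).
    assert (Rabs y * Rabs r * Rabs (-c+d+-a+b) <= 2*M*S).
    { apply Rmult_le_compat; auto using Rabs_pos.
      - apply Rmult_le_pos; apply Rabs_pos.
      - apply Rmult_le_compat; auto using Rabs_pos. }
    assert (Rabs y * Rabs (a + - b) <= 2*(a+b)) by (apply Rmult_le_compat; auto using Rabs_pos).
    assert (Rabs r * (d+b) <= M*(b+d)) by (rewrite (Rplus_comm b d); apply Rmult_le_compat_r; lra).
    unfold C. lra. }
  split; intros Hx.
  - specialize (HHb x ltac:(lra)). apply Rabs_le_inv' in HHb.
    unfold fx.
    set (H := x*r*(-c+d-a+b) + x*(a-b) - r*(d+b) + b + u) in *.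
    assert (0 <= x*(x-1) <= 2*eta) by (split; nra).
    assert (x*(1-x)*H <= x*(x-1)*C).
    { replace (x*(1-x)*H) with (x*(x-1)*(-H)) by ring. apply Rmult_le_compat_l; lra. }
    assert (x*(x-1)*C <= 2*eta*C) by (apply Rmult_le_compat_r; lra).
    nra.
  - specialize (HHb x ltac:(lra)). apply Rabs_le_inv' in HHb.
    unfold fx.
    set (H := x*r*(-c+d-a+b) + x*(a-b) - r*(d+b) + b + u) in *.
    assert (0 <= x*(x-1) <= 2*eta) by (split; nra).
    assert (-(x*(x-1)*C) <= x*(1-x)*H).
    { replace (x*(1-x)*H) with (x*(x-1)*(-H)) by ring.
      replace (-(x*(x-1)*C)) with (x*(x-1)*(-C)) by ring. apply Rmult_le_compat_l; lra. }
    assert (x*(x-1)*C <= 2*eta*C) by (apply Rmult_le_compat_r; lra).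
    nra.
Qed.

Lemma tbarrier (F dF w dw : R -> R) (c1 c0 c2 t0 T eta : R) :
  0 <= t0 -> 0 < eta ->
  (forall t, 0 <= t -> continuity_pt F t) ->
  (forall t, 0 < t -> derivable_pt_lim F t (dF t)) ->
  (forall t, derivable_pt_lim w t (dw t)) ->
  (forall t, t0 <= t <= T -> 0 <= (c1 * F t + c0) * w t + c2 <= eta ->
      c1 * dF t * w t + (c1 * F t + c0) * dw t <= 0) ->
  (c1 * F t0 + c0) * w t0 + c2 <= 0 ->
  forall t, t0 <= t <= T -> (c1 * F t + c0) * w t + c2 <= 0.
Proof.
  intros Ht0 Heta HFc HFd Hw Hcond H0.
  apply (barrier (fun s => (c1 * F s + c0) * w s + c2)
                 (fun s => c1 * dF s * w s + (c1 * F s + c0) * dw s) t0 T eta); auto.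
  - intros t Ht. apply ccomb; [apply HFc; lra|].
    apply derivable_continuous_pt. exact (exist _ (dw t) (Hw t)).
  - intros t Ht. apply dcomb; [apply HFd; lra|apply Hw].
Qed.

Lemma d_one t : derivable_pt_lim (fun _ => 1) t 0.
Proof. apply (derivable_pt_lim_const 1 t). Qed.

Lemma lbarrierT (F dF : R -> R) (c1 c0 t0 T eta : R) :
  0 <= t0 -> 0 < eta ->
  (forall t, 0 <= t -> continuity_pt F t) ->
  (forall t, 0 < t -> derivable_pt_lim F t (dF t)) ->
  (forall t, t0 <= t <= T -> 0 <= c1 * F t + c0 <= eta -> c1 * dF t <= 0) ->
  c1 * F t0 + c0 <= 0 ->
  forall t, t0 <= t <= T -> c1 * F t + c0 <= 0.
Proof.
  intros Ht0 Heta HFc HFd Hcond H0 t Ht.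
  pose proof (tbarrier F dF (fun _ => 1) (fun _ => 0) c1 c0 0 t0 T eta Ht0 Heta HFc HFd d_one) as HB.
  assert (HH : (c1 * F t + c0) * 1 + 0 <= 0).
  { apply HB; auto.
    - intros s Hs Hh. specialize (Hcond s Hs ltac:(lra)). lra.
    - lra. }
  lra.
Qed.

Lemma lbarrier (F dF : R -> R) (c1 c0 t0 eta : R) :
  0 <= t0 -> 0 < eta ->
  (forall t, 0 <= t -> continuity_pt F t) ->
  (forall t, 0 < t -> derivable_pt_lim F t (dF t)) ->
  (forall t, t0 <= t -> 0 <= c1 * F t + c0 <= eta -> c1 * dF t <= 0) ->
  c1 * F t0 + c0 <= 0 ->
  forall t, t0 <= t -> c1 * F t + c0 <= 0.
Proof.
  intros Ht0 Heta HFc HFd Hcond H0 t Ht.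
  apply (lbarrierT F dF c1 c0 t0 t eta); auto.
  - intros s Hs. apply Hcond. lra.
  - lra.
Qed.

Lemma exp_le a b : a <= b -> exp a <= exp b.
Proof. intros H. destruct (Req_dec a b) as [->|Hn]; [lra|]. left; apply exp_increasing; lra. Qed.


Lemma LX a b c d mu u X Rr : 0 < a -> 0 < b -> 0 < c -> 0 < d -> 0 < mu -> 0 < u ->
  is_trajectory a b c d mu u X Rr -> 0 <= X 0 <= 1 ->
  forall t, 0 <= t -> 0 <= X t <= 1.
Proof.
  intros Ha Hb Hc Hd Hmu Hu [HC HD] HX0 t Ht.
  assert (HXc : forall s, 0 <= s -> continuity_pt X s) by (intros; apply HC; auto).
  assert (HRc : forall s, 0 <= s -> continuity_pt Rr s) by (intros; apply HC; auto).
  assert (HXd : forall s, 0 < s -> derivable_pt_lim X s (fx a b c d mu u (X s) (Rr s)))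
    by (intros; apply HD; auto).
  destruct (continuity_ab_maj Rr 0 t Ht (fun s Hs => HRc s (proj1 Hs))) as [Mx [HMx _]].
  destruct (continuity_ab_min Rr 0 t Ht (fun s Hs => HRc s (proj1 Hs))) as [mn [Hmn _]].
  set (M := Rabs (Rr Mx) + Rabs (Rr mn)).
  assert (HM : 0 <= M) by (unfold M; pose proof (Rabs_pos (Rr Mx)); pose proof (Rabs_pos (Rr mn)); lra).
  assert (HRb : forall s, 0 <= s <= t -> Rabs (Rr s) <= M).
  { intros s Hs. specialize (HMx s Hs). specialize (Hmn s Hs). apply Rabs_le.
    pose proof (Rle_abs (Rr Mx)). pose proof (Rle_abs (- Rr mn)). rewrite Rabs_Ropp in H0.
    pose proof (Rabs_pos (Rr Mx)). pose proof (Rabs_pos (Rr mn)). unfold M. lra. }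
  destruct (A8 a b c d mu u M Ha Hb Hc Hd Hmu Hu HM) as [eta [Heta HE]].
  split.
  - assert (H := lbarrierT X (fun s => fx a b c d mu u (X s) (Rr s)) (-1) 0 0 t eta
      (Rle_refl 0) Heta HXc HXd).
    assert (-1 * X t + 0 <= 0); [|lra].
    apply H; [|lra|lra].
    intros s Hs Hh. destruct (HE (X s) (Rr s) (HRb s Hs)) as [_ H2].
    specialize (H2 ltac:(lra)). lra.
  - assert (H := lbarrierT X (fun s => fx a b c d mu u (X s) (Rr s)) 1 (-1) 0 t eta
      (Rle_refl 0) Heta HXc HXd).
    assert (1 * X t + -1 <= 0); [|lra].
    apply H; [|lra|lra].
    intros s Hs Hh. destruct (HE (X s) (Rr s) (HRb s Hs)) as [H1 _].
    specialize (H1 ltac:(lra)). lra.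
Qed.


Lemma LR1 a b c d mu u X Rr :
  is_trajectory a b c d mu u X Rr -> (forall t, 0 <= t -> 0 <= X t <= 1) -> Rr 0 <= 1 ->
  forall t, 0 <= t -> Rr t <= 1.
Proof.
  intros [HC HD] HX HR0 t Ht.
  assert (HRc : forall s, 0 <= s -> continuity_pt Rr s) by (intros; apply HC; auto).
  assert (HRd : forall s, 0 < s -> derivable_pt_lim Rr s (fr (X s) (Rr s)))
    by (intros; apply HD; auto).
  assert (Hw : forall s, derivable_pt_lim (fun s => exp (-2 * s)) s (-2 * exp (-2 * s)))
    by (intros; apply d_exp).
  pose proof (exp_pos (-2*t)) as Het.
  assert (H := tbarrier Rr (fun s => fr (X s) (Rr s)) (fun s => exp (-2*s)) (fun s => -2 * exp (-2*s))
     1 (-1) 0 0 t (exp (-2*t)) (Rle_refl 0) Het HRc HRd Hw).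
  assert (HH : (1 * Rr t + -1) * exp (-2*t) + 0 <= 0).
  { apply H; [|rewrite Rmult_0_r, exp_0; lra|lra].
    intros s Hs Hh. unfold fr.
    pose proof (exp_pos (-2*s)) as Hes.
    assert (Hle : exp (-2*t) <= exp (-2*s)) by (apply exp_le; lra).
    set (e := exp (-2*s)) in *.
    set (z := Rr s - 1).
    assert (Hz0 : 0 <= z) by (unfold z; destruct (Rle_or_lt 0 (Rr s - 1)); auto; nra).
    assert (Hz1 : z <= 1) by (unfold z; nra).
    specialize (HX s ltac:(lra)).
    replace (1 * (Rr s * (1 - Rr s) * (2 * X s - 1)) * e + (1 * Rr s + -1) * (-2 * e))
      with (e * z * (-(1+z)*(2*X s - 1) - 2)) by (unfold z; ring).
    assert (-(1+z)*(2*X s - 1) - 2 <= 0) by nra.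
    assert (0 <= e*z) by nra. nra. }
  pose proof (exp_pos (-2*t)). nra.
Qed.

Lemma LR2 a b c d mu u X Rr :
  is_trajectory a b c d mu u X Rr -> (forall t, 0 <= t -> 0 <= X t <= 1) -> 0 < Rr 0 <= 1 ->
  forall t, 0 <= t -> 0 < Rr t.
Proof.
  intros [HC HD] HX HR0 t Ht.
  assert (HRc : forall s, 0 <= s -> continuity_pt Rr s) by (intros; apply HC; auto).
  assert (HRd : forall s, 0 < s -> derivable_pt_lim Rr s (fr (X s) (Rr s)))
    by (intros; apply HD; auto).
  assert (Hw : forall s, derivable_pt_lim (fun s => exp (1 * s)) s (1 * exp (1 * s)))
    by (intros; apply d_exp).
  assert (He : 0 < Rr 0 / 4) by lra.
  assert (H := tbarrier Rr (fun s => fr (X s) (Rr s)) (fun s => exp (1*s)) (fun s => 1 * exp (1*s))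
     (-1) 0 (Rr 0 / 2) 0 t (Rr 0 / 4) (Rle_refl 0) He HRc HRd Hw).
  assert (HH : (-1 * Rr t + 0) * exp (1*t) + Rr 0 / 2 <= 0).
  { apply H; [|rewrite Rmult_0_r, exp_0; lra|lra].
    intros s Hs Hh. unfold fr.
    pose proof (exp_pos (1*s)) as Hes.
    assert (He1 : 1 <= exp (1*s)) by (pose proof (exp_ineq1_le (1*s)); lra).
    set (e := exp (1*s)) in *.
    assert (Hr0 : 0 < Rr s) by nra.
    assert (Hr1 : Rr s <= 1/2) by nra.
    specialize (HX s ltac:(lra)).
    replace (-1 * (Rr s * (1 - Rr s) * (2 * X s - 1)) * e + (-1 * Rr s + 0) * (1 * e))
      with (- (e * Rr s) * (1 + (1 - Rr s)*(2*X s - 1))) by ring.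
    assert (0 <= 1 + (1 - Rr s)*(2*X s - 1)) by nra.
    assert (0 <= e * Rr s) by nra. nra. }
  pose proof (exp_pos (1*t)). nra.
Qed.


Lemma mvt_ub (f df : R -> R) (a b m : R) : a < b ->
  (forall t, a < t < b -> derivable_pt_lim f t (df t)) ->
  (forall t, a <= t <= b -> continuity_pt f t) ->
  (forall t, a <= t <= b -> df t <= m) -> f b - f a <= m * (b - a).
Proof.
  intros Hab Hd Hc Hm.
  destruct (MVT_gen f a b df) as [cc [Hcc Heq]].
  - intros x Hx. rewrite Rmin_left in Hx by lra. rewrite Rmax_right in Hx by lra.
    apply is_derive_Reals. apply Hd. lra.
  - intros x Hx. rewrite Rmin_left in Hx by lra. rewrite Rmax_right in Hx by lra.
    apply Hc. lra.
  - rewrite Rmin_left in Hcc by lra. rewrite Rmax_right in Hcc by lra.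
    rewrite Heq. specialize (Hm cc Hcc). apply Rmult_le_compat_r; lra.
Qed.

Lemma phase1 a b c d mu u X Rr : 0 < a -> 0 < b -> 0 < c -> 0 < d -> 0 < mu <= 1 -> (c+d)/2 < u ->
  is_trajectory a b c d mu u X Rr ->
  (forall t, 0 <= t -> 0 <= X t <= 1) -> (forall t, 0 <= t -> 0 < Rr t <= 1) -> Rr 0 < 1 ->
  exists T0, 0 <= T0 /\ 1/2 < X T0.
Proof.
  intros Ha Hb Hc Hd Hmu Hu Htr HX HR HR0.
  destruct Htr as [HC HD].
  assert (HXc : forall s, 0 <= s -> continuity_pt X s) by (intros; apply HC; auto).
  assert (HRc : forall s, 0 <= s -> continuity_pt Rr s) by (intros; apply HC; auto).
  assert (HXd : forall s, 0 < s -> derivable_pt_lim X s (fx a b c d mu u (X s) (Rr s)))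
    by (intros; apply HD; auto).
  assert (HRd : forall s, 0 < s -> derivable_pt_lim Rr s (fr (X s) (Rr s)))
    by (intros; apply HD; auto).
  destruct (classic (exists T0, 0 <= T0 /\ 1/2 < X T0)) as [Hex|Hnex]; [exact Hex|exfalso].
  assert (Hle : forall t, 0 <= t -> X t <= 1/2).
  { intros t Ht. destruct (Rle_or_lt (X t) (1/2)); auto. exfalso; apply Hnex; exists t; auto. }
  destruct (A6 a b c d mu u Ha Hb Hc Hd Hmu Hu) as [eta [delta [He0 [He1 [Hdl Hband]]]]].
  destruct (classic (exists t1, 0 <= t1 /\ 1/2 - eta <= X t1)) as [[t1 [Ht1 HXt1]]|HnA].
  -
    assert (Hst : forall t, t1 <= t -> -1 * X t + (1/2 - eta) <= 0).
    { apply (lbarrier X (fun s => fx a b c d mu u (X s) (Rr s)) (-1) (1/2 - eta) t1 eta); auto.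
      - intros t Ht Hh. assert (delta <= fx a b c d mu u (X t) (Rr t)).
        { apply Hband; [lra|]. specialize (HR t ltac:(lra)). lra. }
        lra.
      - lra. }
    assert (Hm := mvt_lb X (fun s => fx a b c d mu u (X s) (Rr s)) t1 (t1 + 2/delta) delta).
    assert (H2 : 0 < 2/delta) by (apply Rdiv_lt_0_compat; lra).
    assert (X (t1 + 2/delta) - X t1 >= delta * (t1 + 2/delta - t1)).
    { apply Hm; [lra| | |].
      - intros t Ht. apply HXd. lra.
      - intros t Ht. apply HXc. lra.
      - intros t Ht. apply Hband.
        + specialize (Hst t ltac:(lra)). specialize (Hle t ltac:(lra)). lra.
        + specialize (HR t ltac:(lra)). lra. }
    replace (delta * (t1 + 2/delta - t1)) with 2 in H by (field; lra).
    pose proof (HX (t1 + 2/delta) ltac:(lra)). pose proof (HX t1 Ht1). lra.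
  -
    assert (Hsm : forall t, 0 <= t -> X t < 1/2 - eta).
    { intros t Ht. destruct (Rlt_or_le (X t) (1/2 - eta)); auto. exfalso; apply HnA; exists t; auto. }
    assert (Hmono : forall t, 0 <= t -> 1 * Rr t + - Rr 0 <= 0).
    { apply (lbarrier Rr (fun s => fr (X s) (Rr s)) 1 (- Rr 0) 0 1); auto; try lra.
      intros t Ht Hh. unfold fr. specialize (HR t Ht). specialize (Hsm t Ht).
      assert (0 <= Rr t * (1 - Rr t)) by nra. nra. }
    set (R0 := Rr 0) in *.
    set (k := 2 * eta * (1 - R0)).
    assert (Hk : 0 < k) by (unfold k; nra).
    assert (Hdec : forall t, 0 <= t -> (1 * Rr t + 0) * (1 + k * t) + - R0 <= 0).
    { intros t Ht.
      apply (tbarrier Rr (fun s => fr (X s) (Rr s)) (fun s => 1 + k * s) (fun _ => k)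
               1 0 (- R0) 0 t 1); auto; try lra.
      - intros s. apply d_aff.
      - intros s Hs Hh. unfold fr. specialize (HR s ltac:(lra)). specialize (Hsm s ltac:(lra)).
        specialize (Hmono s ltac:(lra)).
        assert (Hq : (1 - Rr s) * (2 * X s - 1) <= - k).
        { unfold k. assert ((1 - Rr s)*(2*X s - 1) <= (1 - Rr s)*(-2*eta))
            by (apply Rmult_le_compat_l; lra). nra. }
        assert (Hw : 1 <= 1 + k * s) by nra.
        assert ((1 - Rr s) * (2 * X s - 1) * (1 + k*s) <= -k * (1 + k*s))
          by (apply Rmult_le_compat_r; lra).
        replace (1 * (Rr s * (1 - Rr s) * (2 * X s - 1)) * (1 + k * s) + (1 * Rr s + 0) * k)
          with (Rr s * ((1 - Rr s) * (2 * X s - 1) * (1 + k*s) + k)) by ring.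
        assert ((1 - Rr s) * (2 * X s - 1) * (1 + k*s) + k <= 0) by nra.
        nra.
      - replace ((1 * Rr 0 + 0) * (1 + k * 0) + - R0) with 0 by (unfold R0; ring). lra. }
    set (S := a+b+c+d).
    set (rho := u/(2*S)).
    assert (Hrho : 0 < rho) by (unfold rho, S; apply Rdiv_lt_0_compat; lra).
    set (m := Rmin mu (u/8)).
    assert (Hm0 : 0 < m) by (unfold m; apply Rmin_case; lra).
    set (t2 := R0 / (k * rho)).
    assert (Ht2 : 0 <= t2) by (unfold t2; apply Rmult_le_pos; [specialize (HR 0 (Rle_refl 0)); fold R0 in HR; lra|left; apply Rinv_0_lt_compat; nra]).
    assert (Hsmall : forall t, t2 <= t -> Rr t <= rho).
    { intros t Ht. specialize (Hdec t ltac:(lra)). pose proof (HR t ltac:(lra)) as HRt.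
      assert (k * t2 = R0 / rho) by (unfold t2; field; lra).
      assert (R0 / rho <= k * t) by (rewrite <- H; apply Rmult_le_compat_l; lra).
      assert (Rr t * (R0/rho) <= R0) by nra.
      assert (Rr t * (R0 / rho) = (Rr t / rho) * R0) by (field; lra).
      assert (HR0p : 0 < R0) by (specialize (HR 0 (Rle_refl 0)); fold R0 in HR; lra).
      assert (Rr t / rho <= 1) by nra.
      assert (Rr t / rho * rho <= 1 * rho) by (apply Rmult_le_compat_r; lra).
      replace (Rr t / rho * rho) with (Rr t) in H4 by (field; lra). lra. }
    assert (H2 : 0 < 2/m) by (apply Rdiv_lt_0_compat; lra).
    assert (X (t2 + 2/m) - X t2 >= m * (t2 + 2/m - t2)).
    { apply (mvt_lb X (fun s => fx a b c d mu u (X s) (Rr s))); [lra| | |].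
      - intros t Ht. apply HXd. lra.
      - intros t Ht. apply HXc. lra.
      - intros t Ht. apply A7; try lra.
        + specialize (HX t ltac:(lra)). specialize (Hle t ltac:(lra)). lra.
        + specialize (HR t ltac:(lra)). specialize (Hsmall t ltac:(lra)). fold S. fold rho. lra. }
    replace (m * (t2 + 2/m - t2)) with 2 in H by (field; lra).
    pose proof (HX (t2 + 2/m) ltac:(lra)). pose proof (HX t2 Ht2). lra.
Qed.


Lemma top_bounds a b c d mu u xs : 0 < a -> 0 < b -> 0 < c -> 0 < d -> 0 < mu -> (c+d)/2 < u ->
  1/2 < xs < 1 -> fx a b c d mu u xs 1 = 0 ->
  exists qm, 0 < qm /\ forall x r, 1/2 <= x <= 1 -> 0 <= r <= 1 ->
    (x <= xs -> (xs - x)*qm <= fx a b c d mu u x r) /\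
    (xs <= x -> fx a b c d mu u x r <= - (x - xs)*qm + (1 - r)*((a+b+c+d)/4)).
Proof.
  intros Ha Hb Hc Hd Hmu Hu Hxs H0.
  destruct (A5 a b c d mu u xs Hc Hd Hmu Hu Hxs H0) as [qm [Hqm HA]].
  exists qm. split; auto. intros x r Hx Hr.
  rewrite (A1 a b c d mu u x r). destruct (A2 a b c d x Ha Hb Hc Hd ltac:(lra)) as [HB1 HB2].
  destruct (HA x Hx) as [H1 H2].
  set (B := Bx a b c d x) in *.
  split; intros Hxx.
  - specialize (H1 Hxx). assert (0 <= (r-1)*B) by nra. lra.
  - specialize (H2 Hxx). assert ((r-1)*B <= (1-r)*((a+b+c+d)/4)) by nra. lra.
Qed.

Lemma P2a a b c d mu u X Rr T0 : 0 < a -> 0 < b -> 0 < c -> 0 < d -> 0 < mu <= 1 -> (c+d)/2 < u ->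
  is_trajectory a b c d mu u X Rr ->
  (forall t, 0 <= t -> 0 <= X t <= 1) -> (forall t, 0 <= t -> 0 < Rr t <= 1) ->
  0 <= T0 -> 1/2 < X T0 ->
  exists xlo, 1/2 < xlo /\ forall t, T0 <= t -> xlo <= X t /\ Rr T0 <= Rr t.
Proof.
  intros Ha Hb Hc Hd Hmu Hu Htr HX HR HT0 HXT0.
  destruct Htr as [HC HD].
  assert (HXc : forall s, 0 <= s -> continuity_pt X s) by (intros; apply HC; auto).
  assert (HRc : forall s, 0 <= s -> continuity_pt Rr s) by (intros; apply HC; auto).
  assert (HXd : forall s, 0 < s -> derivable_pt_lim X s (fx a b c d mu u (X s) (Rr s)))
    by (intros; apply HD; auto).
  assert (HRd : forall s, 0 < s -> derivable_pt_lim Rr s (fr (X s) (Rr s)))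
    by (intros; apply HD; auto).
  destruct (A6 a b c d mu u Ha Hb Hc Hd Hmu Hu) as [eta [delta [He0 [He1 [Hdl Hband]]]]].
  set (xlo := Rmin (X T0) (1/2 + eta)).
  assert (Hxlo : 1/2 < xlo) by (unfold xlo; apply Rmin_case; lra).
  assert (Hxlo2 : xlo <= X T0) by apply Rmin_l.
  assert (Hxlo3 : xlo <= 1/2 + eta) by apply Rmin_r.
  exists xlo. split; auto.
  assert (Hlo : forall t, T0 <= t -> -1 * X t + xlo <= 0).
  { apply (lbarrier X (fun s => fx a b c d mu u (X s) (Rr s)) (-1) xlo T0 eta); auto; try lra.
    intros t Ht Hh. assert (delta <= fx a b c d mu u (X t) (Rr t)).
    { apply Hband; [lra|]. specialize (HR t ltac:(lra)). lra. }
    lra. }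
  assert (Hmono : forall t, T0 <= t -> -1 * Rr t + Rr T0 <= 0).
  { apply (lbarrier Rr (fun s => fr (X s) (Rr s)) (-1) (Rr T0) T0 1); auto; try lra.
    intros t Ht Hh. unfold fr. specialize (HR t ltac:(lra)). specialize (Hlo t Ht).
    assert (0 <= Rr t * (1 - Rr t)) by nra. nra. }
  intros t Ht. specialize (Hlo t Ht). specialize (Hmono t Ht). lra.
Qed.

Lemma dist_small x r x' r' e : 0 < e -> Rabs (x - x') <= e/2 -> Rabs (r - r') <= e/2 ->
  dist2 x r x' r' < e.
Proof.
  intros He H1 H2. unfold dist2.
  rewrite <- (sqrt_pow2 e) by lra.
  apply sqrt_lt_1_alt. split.
  - pose proof (pow2_ge_0 (x-x')). pose proof (pow2_ge_0 (r-r')). lra.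
  - apply Rabs_le_inv' in H1. apply Rabs_le_inv' in H2.
    assert ((x-x')^2 <= (e/2)^2) by nra. assert ((r-r')^2 <= (e/2)^2) by nra. nra.
Qed.

Lemma dist_big x r x' r' e : dist2 x r x' r' < e -> Rabs (x - x') < e /\ Rabs (r - r') < e.
Proof.
  unfold dist2. intros H.
  pose proof (pow2_ge_0 (x-x')). pose proof (pow2_ge_0 (r-r')).
  split.
  - eapply Rle_lt_trans; [|exact H].
    rewrite <- sqrt_Rsqr_abs. apply sqrt_le_1_alt. unfold Rsqr. simpl in *. lra.
  - eapply Rle_lt_trans; [|exact H].
    rewrite <- sqrt_Rsqr_abs. apply sqrt_le_1_alt. unfold Rsqr. simpl in *. lra.
Qed.


Lemma phase2 a b c d mu u xs X Rr T0 : 0 < a -> 0 < b -> 0 < c -> 0 < d -> 0 < mu <= 1 -> (c+d)/2 < u ->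
  1/2 < xs < 1 -> fx a b c d mu u xs 1 = 0 ->
  is_trajectory a b c d mu u X Rr ->
  (forall t, 0 <= t -> 0 <= X t <= 1) -> (forall t, 0 <= t -> 0 < Rr t <= 1) ->
  0 <= T0 -> 1/2 < X T0 -> converges_to X Rr xs 1.
Proof.
  intros Ha Hb Hc Hd Hmu Hu Hxs Hfxs Htr HX HR HT0 HXT0.
  destruct (P2a a b c d mu u X Rr T0 Ha Hb Hc Hd Hmu Hu Htr HX HR HT0 HXT0) as [xlo [Hxlo Hlo]].
  destruct (top_bounds a b c d mu u xs Ha Hb Hc Hd ltac:(lra) Hu Hxs Hfxs) as [qm [Hqm Htop]].
  destruct Htr as [HC HD].
  assert (HXc : forall s, 0 <= s -> continuity_pt X s) by (intros; apply HC; auto).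
  assert (HRc : forall s, 0 <= s -> continuity_pt Rr s) by (intros; apply HC; auto).
  assert (HXd : forall s, 0 < s -> derivable_pt_lim X s (fx a b c d mu u (X s) (Rr s)))
    by (intros; apply HD; auto).
  assert (HRd : forall s, 0 < s -> derivable_pt_lim Rr s (fr (X s) (Rr s)))
    by (intros; apply HD; auto).
  set (rho0 := Rr T0).
  assert (Hrho0 : 0 < rho0 <= 1) by (apply HR; auto).
  set (k := (2*xlo - 1) * rho0).
  assert (Hk : 0 < k) by (unfold k; nra).
  assert (Hdec : forall t, T0 <= t -> (-1 * Rr t + 1) * ((1 - k*T0) + k * t) + - (1 - rho0) <= 0).
  { intros t Ht.
    apply (tbarrier Rr (fun s => fr (X s) (Rr s)) (fun s => (1 - k*T0) + k * s) (fun _ => k)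
             (-1) 1 (- (1 - rho0)) T0 t 1); auto; try lra.
    - intros s. apply d_aff.
    - intros s Hs Hh. unfold fr. specialize (HR s ltac:(lra)). destruct (Hlo s ltac:(lra)) as [H1 H2].
      fold rho0 in H2.
      assert (Hw : 1 <= 1 - k*T0 + k * s) by nra.
      assert (Hq : k <= Rr s * (2 * X s - 1)) by (unfold k; nra).
      assert (k * 1 <= Rr s * (2 * X s - 1) * (1 - k*T0 + k*s)) by (apply Rmult_le_compat; nra).
      replace (-1 * (Rr s * (1 - Rr s) * (2 * X s - 1)) * (1 - k * T0 + k * s) + (-1 * Rr s + 1) * k)
        with ((1 - Rr s) * (k - Rr s * (2 * X s - 1) * (1 - k*T0 + k*s))) by ring.
      assert (0 <= 1 - Rr s) by lra. nra.
    - replace ((-1 * Rr T0 + 1) * (1 - k * T0 + k * T0) + - (1 - rho0)) with 0 by (unfold rho0; ring). lra. }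
  intros eps Heps.
  set (D := (a+b+c+d)/4). assert (HD0 : 0 < D) by (unfold D; lra).
  set (e1 := Rmin (eps/2) ((xs - 1/2)/2)).
  assert (He1a : e1 <= eps/2) by apply Rmin_l.
  assert (He1b : e1 <= (xs-1/2)/2) by apply Rmin_r.
  assert (He1 : 0 < e1) by (unfold e1; apply Rmin_case; lra).
  set (m := e1 * qm / 2). assert (Hm : 0 < m) by (unfold m; nra).
  set (gam := Rmin (eps/2) (m / D)).
  assert (Hg1 : gam <= eps/2) by apply Rmin_l.
  assert (Hg2 : gam <= m / D) by apply Rmin_r.
  assert (Hg : 0 < gam) by (unfold gam; apply Rmin_case; [lra|apply Rdiv_lt_0_compat; lra]).
  assert (HgD : gam * D <= m).
  { assert (gam * D <= m / D * D) by (apply Rmult_le_compat_r; lra).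
    replace (m / D * D) with m in H by (field; lra). lra. }
  set (T1 := T0 + 1/(k*gam)).
  assert (HT1 : T0 <= T1) by (unfold T1; assert (0 < 1/(k*gam)) by (apply Rdiv_lt_0_compat; nra); lra).
  assert (HRT1 : forall t, T1 <= t -> 1 - gam <= Rr t).
  { intros t Ht. specialize (Hdec t ltac:(lra)).
    assert (k*(t - T0) >= 1/gam).
    { unfold T1 in Ht. assert (t - T0 >= 1/(k*gam)) by lra.
      assert (k * (t-T0) >= k * (1/(k*gam))) by (apply Rmult_ge_compat_l; lra).
      replace (k * (1/(k*gam))) with (1/gam) in H0 by (field; lra). lra. }
    specialize (HR t ltac:(lra)).
    assert ((1 - Rr t) * (1 + k*(t - T0)) <= 1) by nra.
    assert ((1 - Rr t) * (1/gam) <= 1) by nra.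
    assert (HH : (1 - Rr t) * (1/gam) * gam <= 1 * gam) by (apply Rmult_le_compat_r; lra).
    replace ((1 - Rr t) * (1/gam) * gam) with (1 - Rr t) in HH by (field; lra). lra. }
  set (L := xs - e1). set (U := xs + e1).
  assert (HfL : forall t, T1 <= t -> X t <= L -> m <= fx a b c d mu u (X t) (Rr t)).
  { intros t Ht HXt. destruct (Hlo t ltac:(lra)) as [H1 _]. specialize (HR t ltac:(lra)).
    specialize (HRT1 t Ht). specialize (HX t ltac:(lra)).
    destruct (Htop (X t) (Rr t) ltac:(lra) ltac:(lra)) as [Hl _].
    specialize (Hl ltac:(unfold L in HXt; lra)).
    assert (e1 * qm <= (xs - X t) * qm) by (apply Rmult_le_compat_r; unfold L in HXt; lra).
    unfold m in *. lra. }
  assert (HfU : forall t, T1 <= t -> U <= X t -> fx a b c d mu u (X t) (Rr t) <= - m).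
  { intros t Ht HXt. destruct (Hlo t ltac:(lra)) as [H1 _]. specialize (HR t ltac:(lra)).
    specialize (HRT1 t Ht). specialize (HX t ltac:(lra)).
    destruct (Htop (X t) (Rr t) ltac:(lra) ltac:(lra)) as [_ Hu2].
    specialize (Hu2 ltac:(unfold U in HXt; lra)).
    assert (e1 * qm <= (X t - xs) * qm) by (apply Rmult_le_compat_r; unfold U in HXt; lra).
    assert ((1 - Rr t) * D <= gam * D) by (apply Rmult_le_compat_r; lra).
    fold D in Hu2. unfold m in *. lra. }
  assert (H2m : 0 < 2/m) by (apply Rdiv_lt_0_compat; lra).
  assert (HT2 : exists T2, T1 <= T2 /\ L <= X T2).
  { destruct (classic (exists T2, T1 <= T2 /\ L <= X T2)) as [H|Hn]; auto. exfalso.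
    assert (X (T1 + 2/m) - X T1 >= m * (T1 + 2/m - T1)).
    { apply (mvt_lb X (fun s => fx a b c d mu u (X s) (Rr s))); [lra| | |].
      - intros t Ht. apply HXd. lra.
      - intros t Ht. apply HXc. lra.
      - intros t Ht. apply HfL; [lra|].
        destruct (Rle_or_lt (X t) L); auto. exfalso; apply Hn; exists t; split; lra. }
    replace (m * (T1 + 2/m - T1)) with 2 in H by (field; lra).
    pose proof (HX (T1 + 2/m) ltac:(lra)). pose proof (HX T1 ltac:(lra)). lra. }
  assert (HT3 : exists T3, T1 <= T3 /\ X T3 <= U).
  { destruct (classic (exists T3, T1 <= T3 /\ X T3 <= U)) as [H|Hn]; auto. exfalso.
    assert (X (T1 + 2/m) - X T1 <= (-m) * (T1 + 2/m - T1)).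
    { apply (mvt_ub X (fun s => fx a b c d mu u (X s) (Rr s))); [lra| | |].
      - intros t Ht. apply HXd. lra.
      - intros t Ht. apply HXc. lra.
      - intros t Ht. apply HfU; [lra|].
        destruct (Rle_or_lt U (X t)); auto. exfalso; apply Hn; exists t; split; lra. }
    replace ((-m) * (T1 + 2/m - T1)) with (-2) in H by (field; lra).
    pose proof (HX (T1 + 2/m) ltac:(lra)). pose proof (HX T1 ltac:(lra)). lra. }
  destruct HT2 as [T2 [HT2a HT2b]]. destruct HT3 as [T3 [HT3a HT3b]].
  assert (HL : forall t, T2 <= t -> -1 * X t + L <= 0).
  { apply (lbarrier X (fun s => fx a b c d mu u (X s) (Rr s)) (-1) L T2 1); auto; try lra.
    intros t Ht Hh. specialize (HfL t ltac:(lra) ltac:(lra)). lra. }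
  assert (HU : forall t, T3 <= t -> 1 * X t + - U <= 0).
  { apply (lbarrier X (fun s => fx a b c d mu u (X s) (Rr s)) 1 (- U) T3 1); auto; try lra.
    intros t Ht Hh. specialize (HfU t ltac:(lra) ltac:(lra)). lra. }
  exists (Rmax T2 T3). intros t Ht.
  assert (T2 <= t) by (eapply Rle_trans; [apply Rmax_l|exact Ht]).
  assert (T3 <= t) by (eapply Rle_trans; [apply Rmax_r|exact Ht]).
  specialize (HL t H). specialize (HU t H0). specialize (HRT1 t ltac:(lra)). specialize (HR t ltac:(lra)).
  apply dist_small; auto.
  - apply Rabs_le. unfold L, U in *. lra.
  - apply Rabs_le. lra.
Qed.


Lemma inv_all a b c d mu u X Rr : 0 < a -> 0 < b -> 0 < c -> 0 < d -> 0 < mu -> (c+d)/2 < u ->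
  is_trajectory a b c d mu u X Rr -> 0 <= X 0 <= 1 -> 0 < Rr 0 <= 1 ->
  (forall t, 0 <= t -> 0 <= X t <= 1) /\ (forall t, 0 <= t -> 0 < Rr t <= 1).
Proof.
  intros Ha Hb Hc Hd Hmu Hu Htr HX0 HR0.
  assert (Hu0 : 0 < u) by lra.
  assert (HX := LX a b c d mu u X Rr Ha Hb Hc Hd Hmu Hu0 Htr HX0).
  split; auto. intros t Ht. split.
  - apply (LR2 a b c d mu u X Rr Htr HX HR0 t Ht).
  - apply (LR1 a b c d mu u X Rr Htr HX ltac:(lra) t Ht).
Qed.

Lemma stab a b c d mu u xs : 0 < a -> 0 < b -> 0 < c -> 0 < d -> 0 < mu <= 1 -> (c+d)/2 < u ->
  1/2 < xs < 1 -> fx a b c d mu u xs 1 = 0 -> lyap_stable a b c d mu u xs 1.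
Proof.
  intros Ha Hb Hc Hd Hmu Hu Hxs Hfxs eps Heps.
  destruct (top_bounds a b c d mu u xs Ha Hb Hc Hd ltac:(lra) Hu Hxs Hfxs) as [qm [Hqm Htop]].
  set (D := (a+b+c+d)/4). assert (HD0 : 0 < D) by (unfold D; lra).
  set (al := Rmin (eps/2) ((xs - 1/2)/2)).
  assert (Ha1 : al <= eps/2) by apply Rmin_l.
  assert (Ha2 : al <= (xs-1/2)/2) by apply Rmin_r.
  assert (Ha0 : 0 < al) by (unfold al; apply Rmin_case; lra).
  set (be := Rmin (eps/2) (Rmin (al*qm/(2*D)) (1/2))).
  assert (Hb1 : be <= eps/2) by apply Rmin_l.
  assert (Hb2 : be <= al*qm/(2*D)) by (eapply Rle_trans; [apply Rmin_r|apply Rmin_l]).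
  assert (Hb3 : be <= 1/2) by (eapply Rle_trans; [apply Rmin_r|apply Rmin_r]).
  assert (Hb0 : 0 < be).
  { unfold be. apply Rmin_case; [lra|]. apply Rmin_case; [|lra].
    apply Rdiv_lt_0_compat; nra. }
  assert (HbD : be * D <= al*qm/2).
  { assert (be * D <= al*qm/(2*D) * D) by (apply Rmult_le_compat_r; lra).
    replace (al*qm/(2*D) * D) with (al*qm/2) in H by (field; lra). lra. }
  exists (Rmin al be). split; [apply Rmin_case; lra|].
  intros X Rr Htr [HX0 HR0] Hdist t Ht.
  apply dist_big in Hdist. destruct Hdist as [Hd1 Hd2].
  assert (Hd1' : Rabs (X 0 - xs) < al) by (eapply Rlt_le_trans; [exact Hd1|apply Rmin_l]).
  assert (Hd2' : Rabs (Rr 0 - 1) < be) by (eapply Rlt_le_trans; [exact Hd2|apply Rmin_r]).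
  apply Rabs_def2 in Hd1'. apply Rabs_def2 in Hd2'.
  destruct (inv_all a b c d mu u X Rr Ha Hb Hc Hd ltac:(lra) Hu Htr HX0 ltac:(lra)) as [HX HR].
  destruct (P2a a b c d mu u X Rr 0 Ha Hb Hc Hd Hmu Hu Htr HX HR (Rle_refl 0) ltac:(lra))
    as [xlo [Hxlo Hlo]].
  destruct Htr as [HC HD].
  assert (HXc : forall s, 0 <= s -> continuity_pt X s) by (intros; apply HC; auto).
  assert (HXd : forall s, 0 < s -> derivable_pt_lim X s (fx a b c d mu u (X s) (Rr s)))
    by (intros; apply HD; auto).
  assert (HL : forall t, 0 <= t -> -1 * X t + (xs - al) <= 0).
  { apply (lbarrier X (fun s => fx a b c d mu u (X s) (Rr s)) (-1) (xs - al) 0 1); auto; try lra.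
    intros s Hs Hh. destruct (Hlo s Hs) as [H1 H2]. specialize (HR s Hs). specialize (HX s Hs).
    destruct (Htop (X s) (Rr s) ltac:(lra) ltac:(lra)) as [Hl _].
    specialize (Hl ltac:(lra)).
    assert (0 <= (xs - X s) * qm) by (apply Rmult_le_pos; lra). lra. }
  assert (HU : forall t, 0 <= t -> 1 * X t + - (xs + al) <= 0).
  { apply (lbarrier X (fun s => fx a b c d mu u (X s) (Rr s)) 1 (- (xs + al)) 0 1); auto; try lra.
    intros s Hs Hh. destruct (Hlo s Hs) as [H1 H2]. specialize (HR s Hs). specialize (HX s Hs).
    destruct (Htop (X s) (Rr s) ltac:(lra) ltac:(lra)) as [_ Hu2].
    specialize (Hu2 ltac:(lra)).
    assert (al * qm <= (X s - xs) * qm) by (apply Rmult_le_compat_r; lra).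
    assert ((1 - Rr s) * D <= be * D) by (apply Rmult_le_compat_r; lra).
    fold D in Hu2. assert (0 < al * qm) by nra. lra. }
  specialize (HL t Ht). specialize (HU t Ht). destruct (Hlo t Ht) as [_ HRm]. specialize (HR t Ht).
  apply dist_small; auto.
  - apply Rabs_le. lra.
  - apply Rabs_le. lra.
Qed.

Theorem theorem21 (a b c d mu u xs : R) :
  0 < a -> 0 < b -> 0 < c -> 0 < d -> a + c <= b + d ->
  0 < mu <= 1 -> (c + d) / 2 < u ->
  1 / 2 < xs < 1 -> fx a b c d mu u xs 1 = 0 ->
  almost_globally_stable a b c d mu u xs 1.
Proof.
  intros Ha Hb Hc Hd Hacbd Hmu Hu Hxs Hfxs.
  split; [split|].
  - apply stab; auto.
  - exists (Rmin (xs - 1/2) (1/2)). split; [apply Rmin_case; lra|].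
    intros X Rr Htr [HX0 HR0] Hdist.
    apply dist_big in Hdist. destruct Hdist as [Hd1 Hd2].
    assert (Hd1' : Rabs (X 0 - xs) < xs - 1/2) by (eapply Rlt_le_trans; [exact Hd1|apply Rmin_l]).
    assert (Hd2' : Rabs (Rr 0 - 1) < 1/2) by (eapply Rlt_le_trans; [exact Hd2|apply Rmin_r]).
    apply Rabs_def2 in Hd1'. apply Rabs_def2 in Hd2'.
    destruct (inv_all a b c d mu u X Rr Ha Hb Hc Hd ltac:(lra) Hu Htr HX0 ltac:(lra)) as [HX HR].
    apply (phase2 a b c d mu u xs X Rr 0); auto; lra.
  - intros X Rr Htr [HX0 HR0] HnBt HnBb.
    assert (HR0' : 0 < Rr 0 < 1).
    { split.
      - destruct (Req_dec (Rr 0) 0) as [E|E]; [exfalso; apply HnBb; split; auto|lra].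
      - destruct (Req_dec (Rr 0) 1) as [E|E]; [exfalso; apply HnBt; split; auto|lra]. }
    destruct (inv_all a b c d mu u X Rr Ha Hb Hc Hd ltac:(lra) Hu Htr HX0 ltac:(lra)) as [HX HR].
    destruct (phase1 a b c d mu u X Rr Ha Hb Hc Hd Hmu Hu Htr HX HR ltac:(lra)) as [T0 [HT0 HXT0]].
    apply (phase2 a b c d mu u xs X Rr T0); auto.
Qed.
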